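(* Suppose $\mu_i\in\Pr(\mathbb{T})$ ($i\in\omega$) satisfy $\mu_i\,\hat{}\,\mu_i=\mu_i$, and there are sets $E_i\subseteq\mathbb{T}$ ($i\in\omega$) with $\mu_i(E_j)=1$ if $i=j$ and $\mu_i(E_j)=0$ otherwise. Then no limit point of $\{\mu_i:i\in\omega\}$ (in the weak* topology on $\Pr(\mathbb{T})$) is idempotent, i.e. every such limit point $\mu$ satisfies $\mu\,\hat{}\,\mu\neq\mu$.
   Context: For $a,b\subseteq(0,1]$ put $a\,\hat{}\,b=\tfrac12 a\cup\tfrac12(b+1)$; $\mathbb{T}$ is the set generated from $\mathbf{1}=\{1\}$ by $\hat{}$ (free binary system on one generator). $\Pr(\mathbb{T})$ is the set of finitely additive probability measures on $\mathbb{T}$, viewed as positive normalized functionals on $\ell^\infty(\mathbb{T})$ with the weak* topology; $(\mu\,\hat{}\,\nu)(f)=\int\int f(x\,\hat{}\,y)\,d\nu(y)\,d\mu(x)$. *)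

(* Defs.v *)
From Stdlib Require Import Reals List ClassicalEpsilon.
Open Scope R_scope.

(* The free binary system on one generator: T is generated from the
   generator [one] (the set {1}) by the binary operation [hat] (a ^ b).
   Freeness means T is (isomorphic to) the type of binary terms below. *)
Inductive T : Type :=
| one : T
| hat : T -> T -> T.

Definition bounded (f : T -> R) : Prop :=
  exists M : R, forall x : T, Rabs (f x) <= M.

(* functionals on l^oo(T); only their values on bounded functions matter *)
Definition Fun := (T -> R) -> R.

(* Pr(T): positive normalized linear functionals on l^oo(T)
   (= finitely additive probability measures on T). *)
Definition isPr (m : Fun) : Prop :=
  (forall f g, bounded f -> bounded g -> m (fun x => f x + g x) = m f + m g) /\
  (forall (c : R) f, bounded f -> m (fun x => c * f x) = c * m f) /\
  (forall f, bounded f -> (forall x, 0 <= f x) -> 0 <= m f) /\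
  m (fun _ => 1) = 1.

Definition feq (m n : Fun) : Prop := forall f, bounded f -> m f = n f.

Definition conv (mu nu : Fun) : Fun :=
  fun f => mu (fun x => nu (fun y => f (hat x y))).

Definition idempotent (mu : Fun) : Prop := feq (conv mu mu) mu.

Definition indic (E : T -> Prop) : T -> R :=
  fun x => if excluded_middle_informative (E x) then 1 else 0.

Definition meas (mu : Fun) (E : T -> Prop) : R := mu (indic E).

Definition weakstar_limit_point (mus : nat -> Fun) (mu : Fun) : Prop :=
  forall (fs : list (T -> R)) (eps : R),
    (forall f, In f fs -> bounded f) -> 0 < eps ->
    exists i : nat, ~ feq (mus i) mu /\
      forall f, In f fs -> Rabs (mus i f - mu f) < eps.

(* Main.v *)
Require Import Defs.
From Stdlib Require Import Reals List.
From Stdlib Require Import Lra Lia Classical ClassicalEpsilon FunctionalExtensionality.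
Open Scope R_scope.
Local Notation bounded := Defs.bounded.

Lemma indic_1 (P : T -> Prop) x : P x -> indic P x = 1.
Proof. intros H; unfold indic; destruct excluded_middle_informative; tauto. Qed.
Lemma indic_0 (P : T -> Prop) x : ~ P x -> indic P x = 0.
Proof. intros H; unfold indic; destruct excluded_middle_informative; tauto. Qed.
Lemma indic01 (P : T -> Prop) x : 0 <= indic P x <= 1.
Proof. unfold indic; destruct excluded_middle_informative; lra. Qed.

Lemma bounded01 (f : T -> R) : (forall x, 0 <= f x <= 1) -> bounded f.
Proof.
  intros H; exists 1; intros x; specialize (H x).
  unfold Rabs; destruct Rcase_abs; lra.
Qed.
Lemma bounded_indic P : bounded (indic P).
Proof. apply bounded01, indic01. Qed.
Lemma bounded_const c : bounded (fun _ => c).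
Proof. exists (Rabs c); intros; lra. Qed.
Lemma bounded_sub f g : bounded f -> bounded g -> bounded (fun x => f x - g x).
Proof.
  intros [M HM] [N HN]; exists (M + N); intros x.
  specialize (HM x); specialize (HN x).
  eapply Rle_trans; [apply Rabs_triang|]. rewrite Rabs_Ropp. lra.
Qed.

Lemma bounded_add f g : bounded f -> bounded g -> bounded (fun x => f x + g x).
Proof.
  intros [M HM] [N HN]; exists (M + N); intros x.
  specialize (HM x); specialize (HN x).
  eapply Rle_trans; [apply Rabs_triang|]. lra.
Qed.

Lemma pr_ext (m : Fun) f g : (forall x, f x = g x) -> m f = m g.
Proof. intros H; f_equal; apply functional_extensionality; auto. Qed.

Lemma pr_const m c : isPr m -> m (fun _ => c) = c.
Proof.
  intros (Ha & Hs & Hp & H1).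
  rewrite (pr_ext m (fun _ => c) (fun x => c * (fun _ => 1) x)).
  - rewrite Hs; [rewrite H1; ring | apply bounded_const].
  - intros; simpl; ring.
Qed.

Lemma pr_sub m f g : isPr m -> bounded f -> bounded g ->
  m (fun x => f x - g x) = m f - m g.
Proof.
  intros Hm Hf Hg. destruct Hm as (Ha & Hs & Hp & H1).
  assert (E : m f = m (fun x => (fun x => f x - g x) x + g x)).
  { apply pr_ext; intros; simpl; ring. }
  rewrite E, Ha; [ring | apply bounded_sub; auto | auto].
Qed.

Lemma pr_mono m f g : isPr m -> bounded f -> bounded g ->
  (forall x, f x <= g x) -> m f <= m g.
Proof.
  intros Hm Hf Hg H.
  assert (0 <= m (fun x => g x - f x)).
  { destruct Hm as (Ha & Hs & Hp & H1). apply Hp; [apply bounded_sub; auto|].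
    intros x; specialize (H x); lra. }
  rewrite pr_sub in H0; auto. lra.
Qed.

Lemma pr_01 m f : isPr m -> (forall x, 0 <= f x <= 1) -> 0 <= m f <= 1.
Proof.
  intros Hm H. split.
  - destruct Hm as (Ha & Hs & Hp & H1). apply Hp; [apply bounded01; auto|].
    intros x; apply H.
  - rewrite <- (pr_const m 1 Hm). apply pr_mono; auto.
    apply bounded01; auto. apply bounded_const. intros x; apply H.
Qed.

Definition Pdiag (F : nat -> T -> Prop) (z : T) : Prop :=
  match z with one => False | hat a b => exists j, F j a /\ F j b end.

Theorem proposition6p1 :
  forall (mus : nat -> Fun),
    (forall i, isPr (mus i)) ->
    (forall i, idempotent (mus i)) ->
    (exists E : nat -> (T -> Prop),
        forall i j, meas (mus i) (E j) = (if Nat.eqb i j then 1 else 0)) ->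
    forall mu : Fun, isPr mu -> weakstar_limit_point mus mu ->
      ~ idempotent mu.
Proof.
  intros mus Hpr Hid [E HE] mu Hmu Hlim Hidm.
  pose (G := fun n x => exists k, (k < n)%nat /\ E k x).
  pose (F := fun j x => E j x /\ ~ G j x).
  assert (HEij : forall i j, i <> j -> mus i (indic (E j)) = 0).
  { intros i j Hij. pose proof (HE i j) as H. unfold meas in H.
    rewrite H. destruct (Nat.eqb_spec i j); [lia | reflexivity]. }
  assert (HEii : forall i, mus i (indic (E i)) = 1).
  { intros i. pose proof (HE i i) as H. unfold meas in H.
    rewrite H, Nat.eqb_refl. reflexivity. }
  assert (HFij : forall i j, i <> j -> mus i (indic (F j)) = 0).
  { intros i j Hij. apply Rle_antisym.
    - rewrite <- (HEij i j Hij). apply pr_mono; auto using bounded_indic.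
      intros x. destruct (classic (F j x)) as [h|h].
      + rewrite indic_1, indic_1; [lra| apply h | exact h].
      + rewrite (indic_0 _ _ h). apply indic01.
    - apply pr_01; auto. apply indic01. }
  assert (HG : forall i n, (n <= i)%nat -> mus i (indic (G n)) = 0).
  { intros i n. induction n as [|n IH]; intros Hn.
    - rewrite (pr_ext _ _ (fun _ => 0)). apply pr_const; auto.
      intros x. apply indic_0. intros [k [Hk _]]; lia.
    - apply Rle_antisym; [|apply pr_01; auto; apply indic01].
      assert (Ha := proj1 (Hpr i)).
      rewrite <- (Rplus_0_r 0). rewrite <- (IH ltac:(lia)) at 1.
      rewrite <- (HEij i n ltac:(lia)). rewrite <- Ha by apply bounded_indic.
      apply pr_mono; auto using bounded_indic.
      + apply bounded_add; apply bounded_indic.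
      + intros x. pose proof (indic01 (G n) x); pose proof (indic01 (E n) x).
        destruct (classic (G (S n) x)) as [[k [Hk Hx]]|h].
        * rewrite (indic_1 _ _ (ex_intro _ k (conj Hk Hx) : G (S n) x)).
          destruct (Nat.eq_dec k n) as [->|Hkn].
          -- rewrite (indic_1 (E n) x Hx). lra.
          -- assert (G n x) by (exists k; split; [lia|auto]).
             rewrite (indic_1 (G n) x H1). lra.
        * rewrite (indic_0 _ _ h). lra. }
  assert (HFii : forall i, mus i (indic (F i)) = 1).
  { intros i. apply Rle_antisym; [apply pr_01; auto; apply indic01|].
    assert (Ha := proj1 (Hpr i)).
    rewrite <- (HEii i). rewrite <- (Rplus_0_r (mus i (indic (F i)))).
    rewrite <- (HG i i (le_n i)). rewrite <- Ha by apply bounded_indic.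
    apply pr_mono; auto using bounded_indic.
    - apply bounded_add; apply bounded_indic.
    - intros x. pose proof (indic01 (F i) x); pose proof (indic01 (G i) x); pose proof (indic01 (E i) x).
      destruct (classic (E i x)) as [h|h]; [|rewrite (indic_0 _ _ h); lra].
      destruct (classic (G i x)) as [g|g].
      + rewrite (indic_1 _ _ g). lra.
      + rewrite (indic_1 (F i) x (conj h g)). lra. }
  assert (Hdisj : forall j k x, F j x -> F k x -> j = k).
  { intros j k x [Hj Gj] [Hk Gk]. destruct (Nat.lt_total j k) as [h|[h|h]]; auto.
    - exfalso; apply Gk; exists j; auto.
    - exfalso; apply Gj; exists k; auto. }
  assert (HmuF : forall j, mu (indic (F j)) = 0).
  { intros j.
    assert (Hsep : exists (fs : list (T -> R)) (e0 : R), (forall f, In f fs -> bounded f) /\ 0 < e0 /\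
       (forall i : nat, ~ feq (mus i) mu -> (forall f, In f fs -> Rabs (mus i f - mu f) < e0) -> i <> j)).
    { destruct (classic (feq (mus j) mu)) as [h|h].
      - exists nil, 1. split; [intros f []|split; [lra|]].
        intros i Hi _ ->. auto.
      - unfold feq in h. apply not_all_ex_not in h as [g hg].
        apply imply_to_and in hg as [Hg hg].
        exists (g :: nil), (Rabs (mus j g - mu g)).
        split; [intros f [<-|[]]; auto|split].
        + apply Rabs_pos_lt. intro; apply hg; lra.
        + intros i _ Hi ->. specialize (Hi g (or_introl eq_refl)). lra. }
    destruct Hsep as (fs & e0 & Hfs & He0 & Hsep).
    destruct (Req_dec (mu (indic (F j))) 0) as [h|h]; auto. exfalso.
    destruct (Hlim (indic (F j) :: fs) (Rmin e0 (Rabs (mu (indic (F j))))))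
      as (i & Hi1 & Hi2).
    - intros f [<-|Hf]; [apply bounded_indic|auto].
    - apply Rmin_pos; auto. apply Rabs_pos_lt; auto.
    - assert (Hij : i <> j).
      { apply Hsep; auto. intros f Hf. eapply Rlt_le_trans; [apply Hi2; right; auto|].
        apply Rmin_l. }
      specialize (Hi2 _ (or_introl eq_refl)). rewrite (HFij i j Hij) in Hi2.
      rewrite Rminus_0_l, Rabs_Ropp in Hi2.
      pose proof (Rmin_r e0 (Rabs (mu (indic (F j))))). lra. }
  pose (s := indic (Pdiag F)).
  assert (Hsi : forall i, mus i s = 1).
  { intros i. rewrite <- (Hid i s (bounded_indic _)). unfold conv.
    assert (Hin : forall x, 0 <= mus i (fun y => s (hat x y)) <= 1).
    { intros x. apply pr_01; auto. intros; apply indic01. }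
    apply Rle_antisym; [apply pr_01; auto|].
    rewrite <- (HFii i) at 1. apply pr_mono; [auto|apply bounded_indic|apply bounded01; exact Hin|].
    intros x. destruct (classic (F i x)) as [h|h].
    - rewrite (indic_1 _ _ h). rewrite <- (HFii i) at 1.
      apply pr_mono; [auto|apply bounded_indic|apply bounded_indic|].
      intros y. destruct (classic (F i y)) as [h'|h'].
      + unfold s. rewrite (indic_1 (F i) y h').
        rewrite (indic_1 (Pdiag F) (hat x y) (ex_intro _ i (conj h h'))). lra.
      + rewrite (indic_0 _ _ h'). apply indic01.
    - rewrite (indic_0 _ _ h). apply Hin. }
  assert (Hsmu : mu s = 0).
  { rewrite <- (Hidm s (bounded_indic _)). unfold conv.
    rewrite (pr_ext mu _ (fun _ => 0)); [apply pr_const; auto|].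
    intros x. destruct (classic (exists j, F j x)) as [[j Hj]|hn].
    - rewrite <- (HmuF j). apply pr_ext. intros y.
      destruct (classic (F j y)) as [h|h].
      + unfold s. rewrite (indic_1 (F j) y h).
        apply (indic_1 (Pdiag F) (hat x y) (ex_intro _ j (conj Hj h))).
      + unfold s. rewrite (indic_0 (F j) y h). apply indic_0.
        intros [k [Hk1 Hk2]]. rewrite (Hdisj k j x Hk1 Hj) in Hk2. auto.
    - rewrite <- (pr_const mu 0 Hmu). apply pr_ext. intros y.
      apply indic_0. intros [k [Hk1 _]]. apply hn; eauto. }
  destruct (Hlim (s :: nil) (1/2)) as (i & _ & Hi).
  - intros f [<-|[]]. apply bounded_indic.
  - lra.
  - specialize (Hi s (or_introl eq_refl)). rewrite Hsi, Hsmu in Hi.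
    rewrite Rminus_0_r, Rabs_R1 in Hi. lra.
Qed.
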